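(* Let $(X,d)$ be an arbitrary metric space and let $p\in X$. For $x,y\in X\setminus\{p\}$ define $$\tilde\tau_p(x,y)=\log\Big(1+\frac{d(x,y)}{\sqrt{d(x,p)d(y,p)}}\Big),\qquad \tau_p(x,y)=\log\Big(1+2\frac{d(x,y)}{\sqrt{d(x,p)d(y,p)}}\Big).$$ Then $(X\setminus\{p\},\tilde\tau_p)$ is Gromov hyperbolic with $\delta=\log 3$, and $(X\setminus\{p\},\tau_p)$ is Gromov hyperbolic with $\delta=\log 3+\log 2$.
   Context: A space $(Y,\rho)$ (with $\rho$ a symmetric nonnegative distance function) is Gromov hyperbolic with constant $\delta\ge 0$ if $\rho(x,y)+\rho(z,v)\leq \max\{\rho(x,z)+\rho(y,v),\ \rho(x,v)+\rho(y,z)\}+2\delta$ for all $x,y,z,v\in Y$. *)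

(* Defs.v *)
From Stdlib Require Import Reals.
Open Scope R_scope.

Definition is_metric {X : Type} (d : X -> X -> R) : Prop :=
  (forall x y, 0 <= d x y) /\
  (forall x y, d x y = 0 <-> x = y) /\
  (forall x y, d x y = d y x) /\
  (forall x y z, d x z <= d x y + d y z).

Definition gromov_hyperbolic {X : Type} (Y : X -> Prop) (rho : X -> X -> R)
  (delta : R) : Prop :=
  0 <= delta /\
  forall x y z v, Y x -> Y y -> Y z -> Y v ->
    rho x y + rho z v <=
      Rmax (rho x z + rho y v) (rho x v + rho y z) + 2 * delta.

Definition tau_tilde {X : Type} (d : X -> X -> R) (p x y : X) : R :=
  ln (1 + d x y / sqrt (d x p * d y p)).

Definition tau {X : Type} (d : X -> X -> R) (p x y : X) : R :=
  ln (1 + 2 * (d x y / sqrt (d x p * d y p))).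

(* Main.v *)
Require Import Defs.
From Stdlib Require Import Reals.
From Stdlib Require Import Lra Psatz.
Open Scope R_scope.
Lemma core (al be ga ep dxy dzv dxz dyv dxv dyz : R) :
  0 < al -> 0 < be -> 0 < ga -> 0 < ep ->
  be <= al -> ga <= al -> ep <= al ->
  0 <= dxy -> 0 <= dzv -> 0 <= dxz -> 0 <= dyv -> 0 <= dxv -> 0 <= dyz ->
  dxy <= al*al + be*be -> al*al <= dxz + ga*ga -> al*al <= dxv + ep*ep ->
  ep*ep <= dyv + be*be -> ga*ga <= dyz + be*be -> dzv <= dyz + dyv ->
  (al*be+dxy)*(ga*ep+dzv) <= 9 * Rmax ((al*ga+dxz)*(be*ep+dyv)) ((al*ep+dxv)*(be*ga+dyz)).
Proof.
  intros.
  set (M := Rmax (be*ep+dyv) (be*ga+dyz)).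
  assert (HH1: be*ep+dyv <= M) by apply Rmax_l.
  assert (HH2: be*ga+dyz <= M) by apply Rmax_r.
  assert (Hv: ep*ep <= be*ep+dyv).
  { destruct (Rle_lt_dec ep be); nra. }
  assert (Hz: ga*ga <= be*ga+dyz).
  { destruct (Rle_lt_dec ga be); nra. }
  assert (Hs: ga*ep+dzv <= 3*M) by nra.
  assert (Hx: al*be+dxy <= 3*(al*al)) by nra.
  assert (Ha1: al*al <= al*ga+dxz) by nra.
  assert (Ha2: al*al <= al*ep+dxv) by nra.
  assert (HM: 0 <= M) by nra.
  assert (HL: (al*be+dxy)*(ga*ep+dzv) <= 9*((al*al)*M)).
  { assert (0 <= ga*ep+dzv) by nra.
    apply Rle_trans with (3*(al*al)*(ga*ep+dzv)). apply Rmult_le_compat_r; lra.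
    assert (0 <= al*al) by nra. nra. }
  apply Rle_trans with (1 := HL). apply Rmult_le_compat_l; [lra|].
  unfold M, Rmax at 1. destruct (Rle_dec _ _).
  - apply Rle_trans with (2 := Rmax_r _ _). apply Rmult_le_compat; nra.
  - apply Rle_trans with (2 := Rmax_l _ _). apply Rmult_le_compat; nra.
Qed.

Section S.
Variables (X : Type) (d : X -> X -> R) (p : X).
Hypothesis Hd : is_metric d.

Definition Q (x y : X) := 1 + d x y / sqrt (d x p * d y p).
Definition P (x y z v : X) := Q x y * Q z v <= 9 * Rmax (Q x z * Q y v) (Q x v * Q y z).

Lemma Qsym x y : Q x y = Q y x.
Proof. unfold Q. destruct Hd as (_&_&Hs&_). rewrite Hs, (Rmult_comm (d y p)). reflexivity. Qed.

Lemma sym1 x y z v : P x y z v -> P y x z v.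
Proof. unfold P. intro H. rewrite (Qsym y x), Rmax_comm, (Rmult_comm (Q y v)), (Rmult_comm (Q y z)). exact H. Qed.

Lemma sym2 x y z v : P x y z v -> P z v x y.
Proof. unfold P. intro H. rewrite (Qsym z x), (Qsym v y), (Qsym z y), (Qsym v x), (Rmult_comm (Q z v)), (Rmult_comm (Q y z)). exact H. Qed.

Lemma dpos x : x <> p -> 0 < d x p.
Proof. intro. destruct Hd as (H0&H1&_). destruct (H0 x p) as [h|h]; auto.
  symmetry in h; apply H1 in h; now exfalso. Qed.

Lemma Qeq x y : x <> p -> y <> p ->
  Q x y = (sqrt (d x p) * sqrt (d y p) + d x y) / (sqrt (d x p) * sqrt (d y p)).
Proof. intros. unfold Q. pose proof (dpos _ H). pose proof (dpos _ H0).
  rewrite sqrt_mult by lra. pose proof (sqrt_lt_R0 _ H1). pose proof (sqrt_lt_R0 _ H2).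
  field. split; lra. Qed.

Lemma key4 x y z v : x <> p -> y <> p -> z <> p -> v <> p ->
  d y p <= d x p -> d z p <= d x p -> d v p <= d x p -> P x y z v.
Proof.
  intros Hx Hy Hz Hv Hb Hc He.
  pose proof (dpos _ Hx) as Pa. pose proof (dpos _ Hy) as Pb. pose proof (dpos _ Hz) as Pc. pose proof (dpos _ Hv) as Pe.
  unfold P. rewrite !Qeq by assumption.
  destruct Hd as (H0&_&Hs&Ht).
  pose proof (sqrt_sqrt (d x p) ltac:(lra)). pose proof (sqrt_sqrt (d y p) ltac:(lra)).
  pose proof (sqrt_sqrt (d z p) ltac:(lra)). pose proof (sqrt_sqrt (d v p) ltac:(lra)).
  pose proof (sqrt_lt_R0 _ Pa) as Sa. pose proof (sqrt_lt_R0 _ Pb) as Sb.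
  pose proof (sqrt_lt_R0 _ Pc) as Sc. pose proof (sqrt_lt_R0 _ Pe) as Se.
  set (al := sqrt (d x p)) in *. set (be := sqrt (d y p)) in *.
  set (ga := sqrt (d z p)) in *. set (ep := sqrt (d v p)) in *.
  assert (K : 0 < al*be*ga*ep) by (repeat apply Rmult_lt_0_compat; lra).
  assert (Hc' := core al be ga ep (d x y) (d z v) (d x z) (d y v) (d x v) (d y z)).
  assert (Hm : be <= al /\ ga <= al /\ ep <= al).
  { split; [|split]; apply sqrt_le_1_alt; assumption. }
  destruct Hm as (Hm1&Hm2&Hm3).
  assert (T1 := Ht x p y). rewrite (Hs p y) in T1.
  assert (T2 := Ht x z p). assert (T3 := Ht x v p).
  assert (T4 := Ht v y p). rewrite (Hs v y) in T4.
  assert (T5 := Ht z y p). rewrite (Hs z y) in T5.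
  assert (T6 := Ht z y v). rewrite (Hs z y) in T6.
  specialize (Hc' Sa Sb Sc Se Hm1 Hm2 Hm3 (H0 _ _) (H0 _ _) (H0 _ _) (H0 _ _) (H0 _ _) (H0 _ _)
    ltac:(lra) ltac:(lra) ltac:(lra) ltac:(lra) ltac:(lra) T6).
  set (U := (al*be + d x y)*(ga*ep + d z v)) in *.
  set (U1 := (al*ga + d x z)*(be*ep + d y v)) in *.
  set (U2 := (al*ep + d x v)*(be*ga + d y z)) in *.
  assert (E : forall a b c e n1 n2, (a*b+n1)/(a*b) * ((c*e+n2)/(c*e)) = (a*b+n1)*(c*e+n2) / (a*b*c*e)).
  { intros. destruct (Req_dec (a*b*c*e) 0) as [Z|Z].
    - rewrite Z. unfold Rdiv. rewrite Rinv_0. 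
      assert (a*b = 0 \/ c*e = 0) as [Z'|Z'] by (destruct (Rmult_integral _ _ Z) as [Z1|Z1];
        [destruct (Rmult_integral _ _ Z1) as [Z2|Z2]; [left; exact Z2| right; rewrite Z2; ring]
        | right; rewrite Z1; ring]).
      + rewrite Z', Rinv_0; ring. 
      + rewrite Z', Rinv_0; ring.
    - field. repeat split; intro; apply Z; subst; ring. }
  rewrite !E.
  replace (al*ga*be*ep) with (al*be*ga*ep) by ring.
  replace (al*ep*be*ga) with (al*be*ga*ep) by ring.
  fold U U1 U2.
  assert (IK : 0 < / (al*be*ga*ep)) by (apply Rinv_0_lt_compat; lra).
  unfold Rmax at 1. destruct (Rle_dec _ _) as [r|r].
  - apply Rle_trans with (9 * (U2/(al*be*ga*ep))); [|lra].
    unfold Rdiv in *. rewrite <- Rmult_assoc. apply Rmult_le_compat_r; [lra|].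
    apply Rmult_le_reg_r in r; [|exact IK].
    unfold Rmax in Hc'. destruct (Rle_dec U1 U2); lra.
  - apply Rle_trans with (9 * (U1/(al*be*ga*ep))); [|lra].
    unfold Rdiv in *. rewrite <- Rmult_assoc. apply Rmult_le_compat_r; [lra|].
    assert (r' : U2 * / (al*be*ga*ep) <= U1 * / (al*be*ga*ep)) by lra.
    apply Rmult_le_reg_r in r'; [|exact IK].
    unfold Rmax in Hc'. destruct (Rle_dec U1 U2); lra.
Qed.

Lemma allP x y z v : x <> p -> y <> p -> z <> p -> v <> p -> P x y z v.
Proof.
  intros Hx Hy Hz Hv.
  destruct (Rle_lt_dec (d y p) (d x p)); destruct (Rle_lt_dec (d z p) (d x p));
  destruct (Rle_lt_dec (d v p) (d x p)); destruct (Rle_lt_dec (d z p) (d y p));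
  destruct (Rle_lt_dec (d v p) (d y p)); destruct (Rle_lt_dec (d v p) (d z p));
  first [ apply key4; auto; lra
        | apply sym1; apply key4; auto; lra
        | apply sym2; apply key4; auto; lra
        | apply sym2; apply sym1; apply key4; auto; lra ].
Qed.

Lemma Qge1 x y : x <> p -> y <> p -> 0 <= d x y / sqrt (d x p * d y p).
Proof. intros. pose proof (dpos _ H). pose proof (dpos _ H0).
  destruct Hd as (H0'&_).
  apply Rle_mult_inv_pos; [apply H0'|apply sqrt_lt_R0; nra]. Qed.

End S.

Lemma ln_le' x y : 0 < x -> x <= y -> ln x <= ln y.
Proof. intros. destruct H0. left; apply ln_increasing; auto. subst; lra. Qed.

Lemma ln_Rmax u w : 0 < u -> 0 < w -> ln (Rmax u w) = Rmax (ln u) (ln w).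
Proof. intros. unfold Rmax at 1. destruct (Rle_dec u w).
  - symmetry; apply Rmax_right. apply ln_le'; auto.
  - symmetry; apply Rmax_left. apply ln_le'; lra. Qed.

Lemma ln_step A B C D E F k : 0 < A -> 0 < B -> 0 < C -> 0 < D -> 0 < E -> 0 < F -> 0 < k ->
  A*B <= k * Rmax (C*D) (E*F) ->
  ln A + ln B <= Rmax (ln C + ln D) (ln E + ln F) + ln k.
Proof.
  intros. rewrite <- ln_mult, <- !ln_mult by auto.
  rewrite <- ln_Rmax by (apply Rmult_lt_0_compat; auto).
  rewrite <- ln_mult; [| |auto].
  - apply ln_le'. apply Rmult_lt_0_compat; auto. lra.
  - apply Rlt_le_trans with (C*D). apply Rmult_lt_0_compat; auto. apply Rmax_l.
Qed.

Theorem lemma4p1 (X : Type) (d : X -> X -> R) (p : X) :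
  is_metric d ->
  gromov_hyperbolic (fun x => x <> p) (tau_tilde d p) (ln 3) /\
  gromov_hyperbolic (fun x => x <> p) (tau d p) (ln 3 + ln 2).
Proof.
  intro Hd.
  assert (L3 : 0 < ln 3). { rewrite <- ln_1. apply ln_increasing; lra. }
  assert (L2 : 0 < ln 2). { rewrite <- ln_1. apply ln_increasing; lra. }
  split; split; try lra.
  - intros x y z v Hx Hy Hz Hv.
    assert (E : 2 * ln 3 = ln 9).
    { replace 9 with (3*3) by lra. rewrite ln_mult by lra. ring. }
    rewrite E. unfold tau_tilde.
    pose proof (Qge1 X d p Hd).
    apply ln_step; try lra; try (apply Rlt_le_trans with 1; [lra|]; pose proof (H _ _ Hx Hy); 
      pose proof (H _ _ Hx Hz); pose proof (H _ _ Hx Hv); pose proof (H _ _ Hy Hz);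
      pose proof (H _ _ Hy Hv); pose proof (H _ _ Hz Hv); lra).
    exact (allP X d p Hd x y z v Hx Hy Hz Hv).
  - intros x y z v Hx Hy Hz Hv.
    assert (E : 2 * (ln 3 + ln 2) = ln 36).
    { replace 36 with ((3*3)*(2*2)) by lra. rewrite !ln_mult by lra. ring. }
    rewrite E. unfold tau.
    pose proof (Qge1 X d p Hd) as H.
    pose proof (H _ _ Hx Hy); pose proof (H _ _ Hx Hz); pose proof (H _ _ Hx Hv);
    pose proof (H _ _ Hy Hz); pose proof (H _ _ Hy Hv); pose proof (H _ _ Hz Hv).
    apply ln_step; try lra.
    pose proof (allP X d p Hd x y z v Hx Hy Hz Hv) as HP. unfold P, Q in HP.
    set (a1 := d x y / sqrt (d x p * d y p)) in *.
    set (a2 := d z v / sqrt (d z p * d v p)) in *.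
    set (a3 := d x z / sqrt (d x p * d z p)) in *.
    set (a4 := d y v / sqrt (d y p * d v p)) in *.
    set (a5 := d x v / sqrt (d x p * d v p)) in *.
    set (a6 := d y z / sqrt (d y p * d z p)) in *.
    apply Rle_trans with (4 * ((1+a1)*(1+a2))). nra.
    apply Rle_trans with (4 * (9 * Rmax ((1+a3)*(1+a4)) ((1+a5)*(1+a6)))). lra.
    replace (4*(9*Rmax ((1+a3)*(1+a4)) ((1+a5)*(1+a6)))) with (36 * Rmax ((1+a3)*(1+a4)) ((1+a5)*(1+a6))) by ring.
    apply Rmult_le_compat_l; [lra|].
    unfold Rmax. destruct (Rle_dec _ _); destruct (Rle_dec _ _); nra.
Qed.
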